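(* Let $w\in\Sigma^*$ and let $u$ be a scattered factor of $w$ with $|u|\le\iota(w)$. Then $|E(w,u)|\ge\binom{\iota(w)}{|u|}$.
   Context: The alphabet $\Sigma$ is assumed to be exactly the set of letters occurring in $w$. A word $u$ is a scattered factor of $w$ if $w=v_1u[1]v_2\cdots v_{|u|}u[|u|]v_{|u|+1}$ for some words $v_i$. An embedding of $u$ in $w$ is a map $e:\{1,\dots,|u|\}\to\{1,\dots,|w|\}$ with $e(1)<\dots<e(|u|)$ and $u[i]=w[e(i)]$ for all $i$; $E(w,u)$ is the set of all embeddings of $u$ in $w$. The universality index $\iota(w)$ is the largest $k\in\mathbb{N}_0$ such that every word in $\Sigma^k$ is a scattered factor of $w$. *)

(* Defs.v *)
From mathcomp Require Import all_boot.
Set Implicit Arguments. Unset Strict Implicit. Unset Printing Implicit Defensive.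

Section Words.
Variable T : eqType.

Definition scattered_factor (u w : seq T) : bool := subseq u w.

Definition embeddings (w u : seq T) : {set {ffun 'I_(size u) -> 'I_(size w)}} :=
  [set e : {ffun 'I_(size u) -> 'I_(size w)} |
     [forall i : 'I_(size u), forall j : 'I_(size u), (i < j) ==> (e i < e j)]
     && [forall i : 'I_(size u), tnth (in_tuple u) i == tnth (in_tuple w) (e i)]].

Definition k_universal (w : seq T) (k : nat) : Prop :=
  forall v : seq T, size v = k -> all (fun a => a \in w) v -> scattered_factor v w.

Definition is_universality_index (w : seq T) (k : nat) : Prop :=
  k_universal w k /\ forall k', k_universal w k' -> k' <= k.

End Words.

(* Main.v *)
Require Import Defs.
From mathcomp Require Import all_boot.
Set Implicit Arguments. Unset Strict Implicit. Unset Printing Implicit Defensive.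

Section S.
Variable T : eqType.

Fixpoint embs (w u : seq T) : seq (seq nat) :=
  match w with
  | [::] => if u is [::] then [:: [::]] else [::]
  | a :: w' => match u with
     | [::] => [:: [::]]
     | b :: u' => (if a == b then [seq 0 :: map S s | s <- embs w' u'] else [::])
                  ++ [seq map S s | s <- embs w' u]
     end
  end.

Lemma embs_nil w : embs w [::] = [:: [::]].
Proof. by case: w. Qed.

Definition univ (A w : seq T) k :=
  forall v : seq T, size v = k -> all (fun a => a \in A) v -> subseq v w.

Lemma prefix_mono p s u : size (embs s u) <= size (embs (p ++ s) u).
Proof.
elim: p => [|a p IH] //=; case: u IH => [|b u] IH /=; first by rewrite embs_nil.
by rewrite size_cat !size_map (leq_trans IH) ?leq_addl.
Qed.

Lemma split_lb p s x u : x \in p ->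
  size (embs s u) + size (embs s (x :: u)) <= size (embs (p ++ s) (x :: u)).
Proof.
elim: p => [|a p IH] //=; rewrite in_cons size_cat !size_map.
case: eqP => [->|ne] /= xp.
  by rewrite eqxx size_map leq_add ?prefix_mono.
case: eqP => [e|_]; first by case: ne.
rewrite /=; apply: leq_trans (IH xp) _; exact: leq_addl.
Qed.

Lemma decomp A k B w : B != [::] -> {subset B <= A} ->
  (forall b v, b \in B -> size v = k -> all (fun a => a \in A) v -> subseq (b :: v) w) ->
  exists p s, [/\ w = p ++ s, forall b, b \in B -> b \in p & univ A s k].
Proof.
elim: w B => [|a w IH] B.
  case: B => [|b B] // _ sBA H.
  have := H b (nseq k b) (mem_head _ _) (size_nseq _ _).
  rewrite all_nseq sBA ?mem_head // orbT => /(_ isT).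
  by [].
move=> nB sBA H.
case: (boolP (a \in B)) => aB; last first.
  have H' : forall b v, b \in B -> size v = k -> all (fun a => a \in A) v -> subseq (b :: v) w.
    move=> b v bB sv av; move: (H b v bB sv av) => /=.
    case: eqP => // e; by move: aB; rewrite -e bB.
  have [p [s [ws pB us]]] := IH B nB sBA H'.
  exists (a :: p), s; split => //; first by rewrite ws.
  by move=> b /pB; rewrite in_cons orbC => ->.
set B' := filter (predC1 a) B.
case: (eqVneq B' [::]) => eB'.
  exists [:: a], w; split => // [b bB|v sv av].
    rewrite mem_seq1; apply/negPn/negP => nba.
    have : b \in B' by rewrite mem_filter /= nba bB.
    by rewrite eB'.
  by have := H a v aB sv av; rewrite /= eqxx.
have sB'A : {subset B' <= A} by move=> b; rewrite mem_filter => /andP[_ /sBA].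
have H' : forall b v, b \in B' -> size v = k -> all (fun a => a \in A) v -> subseq (b :: v) w.
  move=> b v; rewrite mem_filter => /andP[/= nba bB] sv av.
  by move: (H b v bB sv av) => /=; rewrite (negbTE nba).
have [p [s [ws pB us]]] := IH B' eB' sB'A H'.
exists (a :: p), s; split => //; first by rewrite ws.
move=> b bB; rewrite in_cons; case: eqP => //= /eqP nba.
by apply: pB; rewrite mem_filter /= nba.
Qed.

Lemma main_lb A k w u : univ A w k -> all (fun a => a \in A) u ->
  'C(k, size u) <= size (embs w u).
Proof.
elim: k w u => [|k IH] w [|x u] Hw Hu; rewrite ?embs_nil ?bin0 //.
move: Hu => /= /andP[xA uA].
have [p [s [ws pA us]]] : exists p s, [/\ w = p ++ s, forall b, b \in A -> b \in p & univ A s k].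
  apply: (decomp (B := A)) => //; first by case: (A) xA.
  move=> b v bA sv av; apply: Hw; rewrite /= ?sv ?bA //.
rewrite ws /= binS; apply: (leq_trans _ (@split_lb p s x u (pA _ xA))).
rewrite addnC leq_add ?IH //.
by apply: (IH s (x :: u)) => //=; rewrite xA.
Qed.
End S.

Section S2.
Variable T : eqType.

Lemma embs_valid (w u : seq T) s : s \in embs w u ->
  [/\ size s = size u, all (fun j => j < size w) s, sorted ltn s &
      forall x0 i, i < size u -> nth x0 w (nth 0 s i) = nth x0 u i].
Proof.
elim: w u s => [|a w IH] u s.
  by case: u => [|b u] //=; rewrite mem_seq1 => /eqP ->; split.
case: u => [|b u] /=; first by rewrite mem_seq1 => /eqP ->; split.
rewrite mem_cat => /orP [].
  case: eqP => [eab|_] //= /mapP [t ht ->]; have [st at_ sot nt] := IH _ _ ht.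
  split.
  - by rewrite /= size_map st.
  - rewrite /= all_map; apply/allP => j jt /=; rewrite ltnS; exact: (allP at_ j jt).
  - rewrite /= path_sortedE; last exact: ltn_trans.
    rewrite sorted_map; apply/andP; split; last exact: sot.
    by apply/allP => j /mapP [? _ ->].
  - move=> x0 [|i] /=; first by rewrite eab.
    by rewrite ltnS => hi; rewrite (nth_map 0) ?st //; exact: nt.
move=> /mapP [t ht ->]; have [st at_ sot nt] := IH _ _ ht.
split.
- by rewrite /= size_map st.
- rewrite /= all_map; apply/allP => j jt /=; rewrite ltnS; exact: (allP at_ j jt).
- by rewrite sorted_map.
- move=> x0 i hi; rewrite (nth_map 0) ?st //; exact: nt.
Qed.

Lemma embs_uniq (w u : seq T) : uniq (embs w u).
Proof.
elim: w u => [|a w IH] [|b u] //=.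
have iS : injective (fun s : seq nat => [seq i.+1 | i <- s]).
  by apply: inj_map => x y [].
rewrite cat_uniq (map_inj_uniq iS) IH andbT.
case: eqP => _ /=; last by apply/hasPn.
rewrite map_inj_uniq ?IH //=; last by move=> x y [] /iS.
apply/hasPn => y /mapP [t ht ->]; apply/negP => /mapP [t' _ e].
have [st _ _ _] := embs_valid ht.
by case: t e st ht.
Qed.

Lemma card_lb (w u : seq T) : size (embs w u) <= #|embeddings w u|.
Proof.
case: w => [|a w].
  case: u => [|b u] //=.
  rewrite card_gt0; apply/set0Pn; exists (ffun0 (card_ord 0)).
  by rewrite inE; apply/andP; split; apply/forallP => -[i hi].
pose f := fun s : seq nat =>
  [ffun i : 'I_(size u) => (inord (nth 0 s i) : 'I_(size w).+1)] :
  {ffun 'I_(size u) -> 'I_(size (a :: w))}.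
have bnd : forall s i, s \in embs (a :: w) u -> i < size u -> nth 0 s i < (size w).+1.
  move=> s i hs hi; have [st at_ _ _] := embs_valid hs.
  by apply: (allP at_); apply: mem_nth; rewrite st.
have fin : forall s, s \in embs (a :: w) u -> f s \in embeddings (a :: w) u.
  move=> s hs; have [st at_ sot nt] := embs_valid hs.
  rewrite /embeddings inE; apply/andP; split; apply/forallP => i.
    apply/forallP => j; apply/implyP => ij.
    rewrite !ffunE /= !inordK ?bnd //.
    by apply: (sorted_ltn_nth ltn_trans 0 sot) => //; rewrite inE st.
  rewrite !(tnth_nth a) /= ffunE inordK ?bnd // nt //.
have finj : {in embs (a :: w) u &, injective f}.
  move=> s1 s2 h1 h2 e.
  have [st1 _ _ _] := embs_valid h1; have [st2 _ _ _] := embs_valid h2.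
  apply: (@eq_from_nth _ 0); first by rewrite st1 st2.
  move=> i hi; rewrite st1 in hi.
  have := congr1 (fun g : {ffun 'I_(size u) -> 'I_(size (a :: w))} => nat_of_ord (g (Ordinal hi))) e.
  by rewrite /= !ffunE /= !inordK ?bnd.
rewrite -(size_map f).
have /card_uniqP <- : uniq (map f (embs (a :: w) u)).
  by rewrite map_inj_in_uniq // embs_uniq.
apply: subset_leq_card; apply/subsetP => y /mapP [s hs ->]; exact: fin.
Qed.
End S2.

Theorem lemma22 (T : eqType) (w u : seq T) (iw : nat) :
  is_universality_index w iw ->
  scattered_factor u w ->
  size u <= iw ->
  'C(iw, size u) <= #|embeddings w u|.
Proof.
move=> [Hu _] Hs _.
apply: (leq_trans _ (card_lb w u)).
apply: (main_lb (A := w)); first exact: Hu.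
by apply/allP => x xu; exact: (mem_subseq Hs xu).
Qed.
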